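(* Let $h>0$, $\alpha>2$, $\beta\ge0$, $c>0$, and let $V$ be as in the setting. Let $\mathcal{N}=(\mathcal{N}_{jk})_{j,k\in\mathbb{Z}}$ be a unitary operator on $l^2(\mathbb{Z})$ such that for all $j,k\in\mathbb{Z}$ $$\Big|\mathcal{N}_{jk}-\delta_{jk}e^{\frac{2\pi}{ih}k^2}-\delta_{-j,k}\frac{e^{\frac{2\pi}{ih}k^2}}{ih}\int_0^{2\pi}v_{-2k}(\tau)\,d\tau\Big|\le\frac{c\,e^{-\beta|j-k|}}{\langle j\rangle\langle k\rangle\langle j-k\rangle^{\alpha-1}}.$$ For $N\in\mathbb{N}$ let $w_{jk}=\mathcal{N}_{jk}$ for $-N\le j,k\le N$, and $\varepsilon_{jk}=\frac{c^2c_{\alpha-1}e^{-\beta|j-k|}}{\langle j\rangle\langle k\rangle(N+1)^2\langle j-k\rangle^{\alpha-1}}$, $\sigma_k=4\sum_{|l|\le|k|}\varepsilon_{lk}$. Then for every sufficiently large $N$ there exists a unitary $(2N+1)\times(2N+1)$ matrix $U=(u_{jk})_{-N\le j,k\le N}$ such that for all $-N\le j,k\le N$ $$|u_{jk}-w_{jk}|\le\sigma_k|w_{jk}|+\sum_{-|k|\le l<|k|,\ l\ne k}4\varepsilon_{lk}|w_{jl}|.$$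
   Context: $V(x,t)=\sum_{k\in\mathbb{Z}}v_k(t)e^{ikx}$ is real-valued and $2\pi$-periodic in $t$ with $v_0\equiv0$; $\langle k\rangle=|k|+1$; $\delta$ is the Kronecker delta; $e^{\frac{t}{ih}k^2}=e^{-itk^2/h}$. For $\nu>1$, $c_\nu$ denotes a constant depending only on $\nu$ such that for all $\beta\ge0$ and $s,m\in\mathbb{Z}$: $\sum_{k\in\mathbb{Z}}\frac{e^{-\beta|s-k|-\beta|k-m|}}{\langle s-k\rangle^\nu\langle k-m\rangle^\nu}\le\frac{c_\nu e^{-\beta|s-m|}}{\langle s-m\rangle^\nu}$. *)

(* Defs.v *)
From Stdlib Require Import Reals ZArith List Lra Lia.
From Coquelicot Require Import Coquelicot.
Open Scope R_scope.

Definition jbr (k : Z) : R := IZR (Z.abs k) + 1.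

Definition kdelta (j k : Z) : R := if Z.eq_dec j k then 1 else 0.

Definition cexpi (theta : R) : C := (cos theta, sin theta).

(* Sum over Z of a real family: the absolutely-indexed series
   a 0 + sum_{n>=1} (a n + a (-n)) converges to s. *)
Definition ZsumR (a : Z -> R) (s : R) : Prop :=
  is_series (fun n : nat => if Nat.eqb n 0 then a 0%Z
                            else a (Z.of_nat n) + a (- Z.of_nat n)%Z) s.

Definition ZsumC (a : Z -> C) (s : C) : Prop :=
  ZsumR (fun k => Re (a k)) (Re s) /\ ZsumR (fun k => Im (a k)) (Im s).

(* Unitarity of a Z x Z matrix (matrix entries M j k = <e_j, M e_k>):
   N^* N = I and N N^* = I written out entrywise. *)
Definition unitary_Z (M : Z -> Z -> C) : Prop :=
  (forall k l : Z, ZsumC (fun j => Cmult (Cconj (M j k)) (M j l)) (RtoC (kdelta k l))) /\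
  (forall j l : Z, ZsumC (fun k => Cmult (M j k) (Cconj (M l k))) (RtoC (kdelta j l))).

(* Finite sums over the integer interval [a, b] (empty if b < a). *)
Definition Zinterval (a b : Z) : list Z :=
  map (fun i : nat => (a + Z.of_nat i)%Z) (seq 0 (Z.to_nat (b - a + 1))).

Definition sumR (a b : Z) (f : Z -> R) : R :=
  fold_right Rplus 0 (map f (Zinterval a b)).

Definition sumC (a b : Z) (f : Z -> C) : C :=
  fold_right Cplus (RtoC 0) (map f (Zinterval a b)).

Definition unitary_fin (N : Z) (U : Z -> Z -> C) : Prop :=
  (forall k l : Z, (- N <= k <= N)%Z -> (- N <= l <= N)%Z ->
     sumC (- N) N (fun j => Cmult (Cconj (U j k)) (U j l)) = RtoC (kdelta k l)) /\
  (forall j l : Z, (- N <= j <= N)%Z -> (- N <= l <= N)%Z ->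
     sumC (- N) N (fun k => Cmult (U j k) (Cconj (U l k))) = RtoC (kdelta j l)).

Definition is_c_nu (nu cnu : R) : Prop :=
  forall (beta : R), 0 <= beta -> forall s m : Z,
    exists S : R,
      ZsumR (fun k => exp (- beta * IZR (Z.abs (s - k)) - beta * IZR (Z.abs (k - m)))
                      / (Rpower (jbr (s - k)) nu * Rpower (jbr (k - m)) nu)) S /\
      S <= cnu * exp (- beta * IZR (Z.abs (s - m))) / Rpower (jbr (s - m)) nu.

(* Standing assumptions on the Fourier coefficients v_k(t) of
   V(x,t) = sum_k v_k(t) e^{ikx}: V real-valued (v_{-k} = conj v_k),
   2pi-periodic in t, v_0 = 0, and each v_k integrable on [0, 2pi]. *)
Definition potential_coeffs (v : Z -> R -> C) : Prop :=
  (forall t, v 0%Z t = RtoC 0) /\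
  (forall k t, v k (t + 2 * PI) = v k t) /\
  (forall k t, v (- k)%Z t = Cconj (v k t)) /\
  (forall k, ex_RInt (fun t => Re (v k t)) 0 (2 * PI) /\
             ex_RInt (fun t => Im (v k t)) 0 (2 * PI)).

Definition int_v (v : Z -> R -> C) (k : Z) : C :=
  (RInt (fun t => Re (v k t)) 0 (2 * PI), RInt (fun t => Im (v k t)) 0 (2 * PI)).

(* e^{(2 pi / (i h)) k^2} = e^{- i 2 pi k^2 / h} *)
Definition phase (h : R) (k : Z) : C := cexpi (- (2 * PI * IZR (k * k)) / h).

Definition Nmodel (h : R) (v : Z -> R -> C) (j k : Z) : C :=
  Cplus (Cmult (RtoC (kdelta j k)) (phase h k))
        (Cmult (RtoC (kdelta (- j) k))
               (Cmult (Cdiv (phase h k) (Cmult Ci (RtoC h))) (int_v v (- 2 * k)%Z))).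

Definition eps_jk (c cnu alpha beta : R) (N : nat) (j k : Z) : R :=
  c ^ 2 * cnu * exp (- beta * IZR (Z.abs (j - k)))
  / (jbr j * jbr k * (INR N + 1) ^ 2 * Rpower (jbr (j - k)) (alpha - 1)).

Definition sigma_k (c cnu alpha beta : R) (N : nat) (k : Z) : R :=
  4 * sumR (- Z.abs k) (Z.abs k) (fun l => eps_jk c cnu alpha beta N l k).

(* Main.v *)
Require Import Defs.
From Stdlib Require Import Reals ZArith List Lra Lia FunctionalExtensionality.
From Coquelicot Require Import Coquelicot.
Open Scope R_scope.

Fixpoint csum (n : nat) (f : nat -> C) : C :=
  match n with O => RtoC 0 | S n' => Cplus (csum n' f) (f n') end.
Fixpoint rsum (n : nat) (f : nat -> R) : R :=
  match n with O => 0 | S n' => rsum n' f + f n' end.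

Definition cd (m q : nat) : C := if Nat.eqb m q then RtoC 1 else RtoC 0.

Lemma csum_ext n f g : (forall i, (i < n)%nat -> f i = g i) -> csum n f = csum n g.
Proof. induction n; simpl; intros H; auto. rewrite IHn by (intros; apply H; lia). rewrite H by lia; auto. Qed.
Lemma rsum_ext n f g : (forall i, (i < n)%nat -> f i = g i) -> rsum n f = rsum n g.
Proof. induction n; simpl; intros H; auto. rewrite IHn by (intros; apply H; lia). rewrite H by lia; auto. Qed.

Lemma csum_plus n f g : csum n (fun i => Cplus (f i) (g i)) = Cplus (csum n f) (csum n g).
Proof. induction n; simpl. ring. rewrite IHn; ring. Qed.
Lemma csum_minus n f g : csum n (fun i => Cminus (f i) (g i)) = Cminus (csum n f) (csum n g).
Proof. induction n; simpl. ring. rewrite IHn; ring. Qed.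
Lemma csum_scal_l n a f : csum n (fun i => Cmult a (f i)) = Cmult a (csum n f).
Proof. induction n; simpl. ring. rewrite IHn; ring. Qed.
Lemma csum_scal_r n a f : csum n (fun i => Cmult (f i) a) = Cmult (csum n f) a.
Proof. induction n; simpl. ring. rewrite IHn; ring. Qed.
Lemma csum_zero n f : (forall i, (i < n)%nat -> f i = RtoC 0) -> csum n f = RtoC 0.
Proof. induction n; simpl; intros H; auto. rewrite IHn by (intros; apply H; lia). rewrite H by lia. ring. Qed.
Lemma csum_swap n m f : csum n (fun i => csum m (fun j => f i j)) = csum m (fun j => csum n (fun i => f i j)).
Proof. induction n; simpl. symmetry; apply csum_zero; auto. rewrite IHn. rewrite <- csum_plus. auto. Qed.
Lemma csum_conj n f : Cconj (csum n f) = csum n (fun i => Cconj (f i)).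
Proof. induction n; simpl. apply injective_projections; simpl; lra.
 rewrite Cplus_conj, IHn; auto. Qed.
Lemma csum_delta n q x : (q < n)%nat -> csum n (fun m => Cmult (x m) (cd m q)) = x q.
Proof. induction n; simpl; intros H. lia. unfold cd at 2.
 destruct (Nat.eqb_spec n q). subst. rewrite csum_zero. ring. intros i Hi. unfold cd.
 destruct (Nat.eqb_spec i q). lia. ring.
 rewrite IHn by lia. ring. Qed.
Lemma csum_delta' n q x : (q < n)%nat -> csum n (fun m => Cmult (cd q m) (x m)) = x q.
Proof. intros H. rewrite <- (csum_delta n q x H). apply csum_ext. intros i _. unfold cd.
 destruct (Nat.eqb_spec q i); destruct (Nat.eqb_spec i q); try lia; ring. Qed.
Lemma Re_csum n f : Re (csum n f) = rsum n (fun i => Re (f i)).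
Proof. induction n; simpl; auto. rewrite <- IHn. auto. Qed.
Lemma Im_csum n f : Im (csum n f) = rsum n (fun i => Im (f i)).
Proof. induction n; simpl; auto. rewrite <- IHn. auto. Qed.

Lemma rsum_le n f g : (forall i, (i < n)%nat -> f i <= g i) -> rsum n f <= rsum n g.
Proof. induction n; simpl; intros H. lra. pose proof (H n ltac:(lia)). pose proof (IHn ltac:(intros; apply H; lia)). lra. Qed.
Lemma rsum_nonneg n f : (forall i, (i < n)%nat -> 0 <= f i) -> 0 <= rsum n f.
Proof. intros H. replace 0 with (rsum n (fun _ => 0)). apply rsum_le; auto.
 induction n; simpl; auto. rewrite IHn; [lra|intros; apply H; lia]. Qed.
Lemma rsum_plus n f g : rsum n (fun i => f i + g i) = rsum n f + rsum n g.
Proof. induction n; simpl. lra. rewrite IHn; lra. Qed.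
Lemma rsum_scal_l n a f : rsum n (fun i => a * f i) = a * rsum n f.
Proof. induction n; simpl. lra. rewrite IHn; lra. Qed.
Lemma rsum_mono_n n n' f : (n <= n')%nat -> (forall i, (i < n')%nat -> 0 <= f i) -> rsum n f <= rsum n' f.
Proof. intros Hle; induction Hle; intros H. lra. simpl. pose proof (H m ltac:(lia)). pose proof (IHHle ltac:(intros; apply H; lia)). lra. Qed.
Lemma rsum_zero n f : (forall i, (i < n)%nat -> f i = 0) -> rsum n f = 0.
Proof. induction n; simpl; intros H; auto. rewrite IHn by (intros; apply H; lia). rewrite H by lia. lra. Qed.
Lemma rsum_delta n q x : (q < n)%nat -> rsum n (fun m => if Nat.eqb m q then x m else 0) = x q.
Proof. induction n; intros H. lia. cbn [rsum].
 destruct (Nat.eqb_spec n q). subst. rewrite rsum_zero. lra.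
 intros i Hi. destruct (Nat.eqb_spec i q). lia. lra.
 rewrite IHn by lia. lra. Qed.
Lemma Cmod_csum n f : Cmod (csum n f) <= rsum n (fun i => Cmod (f i)).
Proof. induction n; simpl. rewrite Cmod_0; lra. eapply Rle_trans. apply Cmod_triangle. lra. Qed.
Lemma rsum_swap n m f : rsum n (fun i => rsum m (fun j => f i j)) = rsum m (fun j => rsum n (fun i => f i j)).
Proof. induction n; simpl. symmetry. apply rsum_zero; auto.
 rewrite IHn. rewrite <- rsum_plus. auto. Qed.
Lemma Rabs_le_inv x y : Rabs x <= y -> - y <= x <= y.
Proof. unfold Rabs. destruct (Rcase_abs x); lra. Qed.

Lemma cd_sym p q : cd p q = cd q p.
Proof. unfold cd. destruct (Nat.eqb_spec p q); destruct (Nat.eqb_spec q p); auto; lia. Qed.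
Lemma cd_conj p q : Cconj (cd p q) = cd p q.
Proof. unfold cd. destruct (Nat.eqb p q); apply injective_projections; simpl; lra. Qed.

Lemma rsum_nonneg_zero n f : (forall i, (i < n)%nat -> 0 <= f i) -> rsum n f = 0 ->
  forall i, (i < n)%nat -> f i = 0.
Proof. induction n; simpl; intros H Hs i Hi. lia.
  assert (0 <= rsum n f) by (apply rsum_nonneg; intros; apply H; lia).
  pose proof (H n ltac:(lia)).
  destruct (Nat.eq_dec i n). subst; lra. apply IHn; [intros; apply H; lia|lra|lia]. Qed.

Lemma conj_mul_self z : Cmult (Cconj z) z = RtoC (Cmod z ^ 2).
Proof. rewrite Cmod2_conj. ring. Qed.
Lemma mul_conj_self z : Cmult z (Cconj z) = RtoC (Cmod z ^ 2).
Proof. rewrite Cmod2_conj. ring. Qed.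

Lemma RtoC_rsum n f : RtoC (rsum n f) = csum n (fun i => RtoC (f i)).
Proof. induction n; simpl; auto. rewrite <- IHn. apply injective_projections; simpl; lra. Qed.

Lemma cols_to_rows n (U : nat -> nat -> C) :
  (forall p q, (p < n)%nat -> (q < n)%nat -> csum n (fun j => Cmult (Cconj (U p j)) (U q j)) = cd p q) ->
  forall i i', (i < n)%nat -> (i' < n)%nat -> csum n (fun q => Cmult (U q i) (Cconj (U q i'))) = cd i i'.
Proof.
  intros H.
  set (P := fun i i' => csum n (fun q => Cmult (U q i) (Cconj (U q i')))).
  set (Q := fun i i' => Cminus (cd i i') (P i i')).
  assert (HPc : forall i i', Cconj (P i i') = P i' i).
  { intros. unfold P. rewrite csum_conj. apply csum_ext. intros. rewrite Cmult_conj, Cconj_conj. ring. }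
  assert (HP2 : forall i i'', (i < n)%nat -> (i'' < n)%nat -> csum n (fun i' => Cmult (P i i') (P i' i'')) = P i i'').
  { intros i i'' Hi Hi''. unfold P.
    transitivity (csum n (fun i' => csum n (fun q => csum n (fun q' =>
        Cmult (Cmult (U q i) (Cconj (U q' i''))) (Cmult (Cconj (U q i')) (U q' i')))))).
    { apply csum_ext; intros i' _. rewrite <- csum_scal_r. apply csum_ext; intros q _.
      rewrite <- csum_scal_l. apply csum_ext; intros q' _. ring. }
    rewrite csum_swap. apply csum_ext; intros q Hq. rewrite csum_swap.
    transitivity (csum n (fun q' => Cmult (Cmult (U q i) (Cconj (U q' i''))) (cd q q'))).
    { apply csum_ext; intros q' Hq'. rewrite csum_scal_l. rewrite H; auto. }
    rewrite (csum_ext _ _ (fun q' => Cmult (cd q q') (Cmult (U q i) (Cconj (U q' i''))))).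
    rewrite csum_delta'; auto. intros; ring. }
  assert (HQ2 : forall i i'', (i < n)%nat -> (i'' < n)%nat -> csum n (fun i' => Cmult (Q i i') (Q i' i'')) = Q i i'').
  { intros i i'' Hi Hi''. unfold Q.
    rewrite (csum_ext _ _ (fun i' => Cplus (Cminus (Cminus (Cmult (cd i i') (cd i' i'')) (Cmult (cd i i') (P i' i''))) (Cmult (P i i') (cd i' i''))) (Cmult (P i i') (P i' i''))))
      by (intros; ring).
    rewrite csum_plus, !csum_minus, HP2 by auto.
    rewrite csum_delta' by auto. rewrite csum_delta' by auto. rewrite csum_delta by auto. ring. }
  assert (Htr : csum n (fun i => Q i i) = RtoC 0).
  { unfold Q. rewrite csum_minus.
    transitivity (Cminus (csum n (fun _ => RtoC 1)) (csum n (fun q => csum n (fun i => Cmult (Cconj (U q i)) (U q i))))).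
    f_equal. apply csum_ext; intros. unfold cd; rewrite Nat.eqb_refl; auto.
    unfold P. rewrite csum_swap. apply csum_ext; intros. apply csum_ext; intros. ring.
    rewrite <- csum_minus. apply csum_zero. intros q Hq. rewrite H by auto. unfold cd; rewrite Nat.eqb_refl. ring. }
  assert (Hsum : rsum n (fun i => rsum n (fun i' => Cmod (Q i i') ^ 2)) = 0).
  { apply (f_equal Re) in Htr. simpl in Htr. rewrite <- Htr. rewrite Re_csum.
    apply rsum_ext; intros i Hi. rewrite <- (HQ2 i i Hi Hi). rewrite Re_csum. apply rsum_ext; intros i' Hi'.
    assert (Cconj (Q i i') = Q i' i). { unfold Q. rewrite Cminus_conj, HPc, cd_conj, cd_sym. auto. }
    rewrite <- H0, mul_conj_self. simpl. auto. }
  intros i i' Hi Hi'.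
  assert (Cmod (Q i i') ^ 2 = 0).
  { apply (rsum_nonneg_zero n (fun i' => Cmod (Q i i') ^ 2)); auto. intros; apply pow2_ge_0.
    apply (rsum_nonneg_zero n (fun i => rsum n (fun i' => Cmod (Q i i') ^ 2))); auto.
    intros. apply rsum_nonneg. intros; apply pow2_ge_0. }
  assert (Q i i' = RtoC 0). { apply Cmod_eq_0. nra. }
  unfold Q in H1. change (P i i' = cd i i'). replace (P i i') with (Cminus (cd i i') (Cminus (cd i i') (P i i'))) by ring. rewrite H1. ring.
Qed.

Section GS.
Variable n : nat.
Variable w : nat -> nat -> C.

Definition ip (x y : nat -> C) : C := csum n (fun j => Cmult (Cconj (x j)) (y j)).
Definition gram p q := ip (w p) (w q).
Definition comb (a : nat -> C) (j : nat) : C := csum n (fun m => Cmult (a m) (w m j)).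

Definition uT (T : nat -> nat -> C) p := comb (T p).
Definition bT T q l := ip (uT T l) (w q).
Definition cnew T q m := Cminus (cd m q) (csum q (fun l => Cmult (bT T q l) (T l m))).
Definition vnew T q := comb (cnew T q).
Definition nu T q := sqrt (rsum n (fun j => Cmod (vnew T q j) ^ 2)).
Definition anew T q m := Cdiv (cnew T q m) (RtoC (nu T q)).

Fixpoint Tab (k : nat) : nat -> nat -> C :=
  match k with O => fun _ _ => RtoC 0
  | S k => fun p m => if Nat.eqb p k then anew (Tab k) k m else Tab k p m end.

Definition acoef p m := Tab (S p) p m.

Lemma Tab_stable k p m : (p < k)%nat -> Tab k p m = acoef p m.
Proof. induction k; intros H. lia. simpl. destruct (Nat.eqb_spec p k). subst. unfold acoef. simpl. rewrite Nat.eqb_refl. auto.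
  apply IHk. lia. Qed.

Lemma anew_ext T T' q m : (forall l m, (l < q)%nat -> T l m = T' l m) -> anew T q m = anew T' q m.
Proof. intros H.
  assert (Hu : forall l j, (l < q)%nat -> uT T l j = uT T' l j).
  { intros. unfold uT, comb. apply csum_ext; intros. rewrite H; auto. }
  assert (Hb : forall l, (l < q)%nat -> bT T q l = bT T' q l).
  { intros. unfold bT, ip. apply csum_ext; intros. rewrite Hu; auto. }
  assert (Hc : forall m, cnew T q m = cnew T' q m).
  { intros. unfold cnew. f_equal. apply csum_ext; intros. rewrite Hb, H; auto. }
  assert (Hv : forall j, vnew T q j = vnew T' q j).
  { intros. unfold vnew, comb. apply csum_ext; intros. rewrite Hc; auto. }
  unfold anew, nu. rewrite Hc. f_equal. f_equal. f_equal. apply rsum_ext; intros. rewrite Hv; auto. Qed.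

Lemma acoef_eq q m : acoef q m = anew acoef q m.
Proof. unfold acoef at 1. simpl. rewrite Nat.eqb_refl. apply anew_ext. intros. apply Tab_stable; auto. Qed.

Lemma ip_conj x y : Cconj (ip x y) = ip y x.
Proof. unfold ip. rewrite csum_conj. apply csum_ext; intros. rewrite Cmult_conj, Cconj_conj. ring. Qed.

Lemma ip_comb_l a y : ip (comb a) y = csum n (fun m => Cmult (Cconj (a m)) (ip (w m) y)).
Proof. unfold ip, comb.
  transitivity (csum n (fun j => csum n (fun m => Cmult (Cconj (a m)) (Cmult (Cconj (w m j)) (y j))))).
  apply csum_ext; intros. rewrite csum_conj, <- csum_scal_r. apply csum_ext; intros. rewrite Cmult_conj. ring.
  rewrite csum_swap. apply csum_ext; intros. rewrite csum_scal_l. auto. Qed.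

Lemma ip_self x : ip x x = RtoC (rsum n (fun j => Cmod (x j) ^ 2)).
Proof. unfold ip. rewrite RtoC_rsum. apply csum_ext; intros. apply conj_mul_self. Qed.

Lemma ip_lin_r x y (c : nat -> C) (z : nat -> nat -> C) k :
  ip x (fun j => Cminus (y j) (csum k (fun l => Cmult (c l) (z l j)))) =
  Cminus (ip x y) (csum k (fun l => Cmult (c l) (ip x (z l)))).
Proof. unfold ip.
  transitivity (Cminus (csum n (fun j => Cmult (Cconj (x j)) (y j)))
     (csum n (fun j => csum k (fun l => Cmult (c l) (Cmult (Cconj (x j)) (z l j)))))).
  rewrite <- csum_minus. apply csum_ext; intros.
  rewrite (csum_ext k (fun l => Cmult (c l) (Cmult (Cconj (x i)) (z l i))) (fun l => Cmult (Cconj (x i)) (Cmult (c l) (z l i)))) by (intros; ring).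
  rewrite csum_scal_l. ring.
  f_equal. rewrite csum_swap. apply csum_ext; intros. rewrite csum_scal_l. auto. Qed.

Lemma ip_lin_l x y (c : nat -> C) (z : nat -> nat -> C) k :
  ip (fun j => Cminus (y j) (csum k (fun l => Cmult (c l) (z l j)))) x =
  Cminus (ip y x) (csum k (fun l => Cmult (Cconj (c l)) (ip (z l) x))).
Proof. rewrite <- ip_conj, ip_lin_r, Cminus_conj, csum_conj, ip_conj. f_equal. apply csum_ext; intros.
  rewrite Cmult_conj, ip_conj. auto. Qed.

Lemma ip_scal_r x y a : ip x (fun j => Cmult a (y j)) = Cmult a (ip x y).
Proof. unfold ip. rewrite <- csum_scal_l. apply csum_ext; intros. ring. Qed.
Lemma ip_scal_l x y a : ip (fun j => Cmult a (y j)) x = Cmult (Cconj a) (ip y x).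
Proof. unfold ip. rewrite <- csum_scal_l. apply csum_ext; intros. rewrite Cmult_conj. ring. Qed.

End GS.

Lemma inv_bound nu t : 0 < nu -> Rabs (nu ^ 2 - 1) <= t -> t <= 1/100 -> Rabs (/ nu - 1) <= 2 * t.
Proof. intros H1 H2 H3. assert (nu >= 99/100).
  { destruct (Rlt_or_le nu (99/100)); [|lra]. exfalso. apply Rabs_le_inv in H2. nra. }
  apply Rabs_le_inv in H2. set (x := / nu). assert (nu * x = 1) by (unfold x; field; lra).
  assert (0 < x) by (unfold x; apply Rinv_0_lt_compat; lra).
  assert (x <= 2) by nra.
  apply Rabs_le. split; nra. Qed.

Section Step.
Variable n : nat.
Variable w : nat -> nat -> C.
Variable E : nat -> nat -> R.
Variables d0 d1 : R.
Hypothesis HE : forall p q, (p < n)%nat -> (q < n)%nat -> Cmod (Cminus (gram n w p q) (cd p q)) <= E p q.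
Hypothesis Esym : forall p q, E p q = E q p.
Hypothesis Epos : forall p q, 0 <= E p q.
Hypothesis Ed0 : forall p q, (p < n)%nat -> (q < n)%nat -> E p q <= d0.
Hypothesis Hd0 : d0 <= 1/100.
Hypothesis Hconv : forall p q, (p < n)%nat -> (q < n)%nat -> rsum n (fun r => E p r * E r q) <= d1 * E p q.
Hypothesis Hd1 : 0 <= d1 <= 1/100.
Hypothesis HT : forall q, (q < n)%nat -> rsum (S q) (fun r => E r q) <= 1/100.

Notation a := (acoef n w).
Notation u := (uT n w a).

Definition INV q :=
  (forall p m, (p < q)%nat -> (p < m)%nat -> a p m = RtoC 0) /\
  (forall p p', (p < q)%nat -> (p' < q)%nat -> ip n (u p) (u p') = cd p p') /\
  (forall p m, (p < q)%nat -> (m < p)%nat -> Cmod (a p m) <= 2 * E m p) /\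
  (forall p, (p < q)%nat -> Cmod (Cminus (a p p) (RtoC 1)) <= 2 * rsum (S p) (fun r => E r p)).

Lemma INV0 : INV 0.
Proof. repeat split; intros; lia. Qed.

Section StepQ.
Variable q : nat.
Hypothesis Hq : (q < n)%nat.
Hypothesis IH : INV q.

Let b l := bT n w a q l.

Lemma F1 l m : (l < q)%nat -> Cmod (a l m) <= 2 * E m l + (if Nat.eqb m l then 102/100 else 0).
Proof. intros Hl. destruct IH as [Hs [Ho [Hb Hd]]].
  destruct (lt_eq_lt_dec m l) as [[H|H]|H].
  - destruct (Nat.eqb_spec m l); [lia|]. pose proof (Hb l m Hl H). lra.
  - subst m. rewrite Nat.eqb_refl. pose proof (Hd l Hl).
    replace (a l l) with (Cplus (Cminus (a l l) (RtoC 1)) (RtoC 1)) by ring.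
    eapply Rle_trans. apply Cmod_triangle. rewrite Cmod_1.
    pose proof (HT l ltac:(lia)). pose proof (Epos l l). lra.
  - rewrite Hs by auto. rewrite Cmod_0. destruct (Nat.eqb m l); pose proof (Epos m l); lra.
Qed.

Lemma F2 l : (l < q)%nat -> Cmod (b l) <= 105/100 * E l q.
Proof. intros Hl. destruct IH as [Hs [Ho [Hb Hd]]].
  unfold b, bT, uT. rewrite ip_comb_l.
  eapply Rle_trans. apply Cmod_csum.
  eapply Rle_trans. apply (rsum_le _ _ (fun m => 2 * (E l m * E m q) + (if Nat.eqb m l then 102/100 * E m q else 0))).
  { intros m Hm. rewrite Cmod_mult, Cmod_conj.
    destruct (le_lt_dec m l).
    - assert (Cmod (ip n (w m) (w q)) <= E m q).
      { pose proof (HE m q Hm Hq). unfold gram in H. unfold cd in H. destruct (Nat.eqb_spec m q). lia.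
        replace (Cminus (ip n (w m) (w q)) (RtoC 0)) with (ip n (w m) (w q)) in H by ring. auto. }
      pose proof (F1 l m Hl). rewrite (Esym l m).
      assert (0 <= Cmod (a l m)) by apply Cmod_ge_0. pose proof (Epos m q).
      destruct (Nat.eqb m l); nra.
    - rewrite Hs by auto. rewrite Cmod_0. pose proof (Epos l m). pose proof (Epos m q).
      destruct (Nat.eqb m l); nra. }
  rewrite rsum_plus, rsum_scal_l, rsum_delta by lia.
  pose proof (Hconv l q ltac:(lia) Hq). pose proof (Epos l q). nra.
Qed.

Lemma F3 m : (m < q)%nat -> Cmod (cnew n w a q m) <= 11/10 * E m q.
Proof. intros Hm. destruct IH as [Hs [Ho [Hb Hd]]]. unfold cnew.
  unfold cd. destruct (Nat.eqb_spec m q). lia.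
  replace (Cminus (RtoC 0) _) with (Copp (csum q (fun l => Cmult (bT n w a q l) (a l m)))) by ring.
  rewrite Cmod_opp. eapply Rle_trans. apply Cmod_csum.
  eapply Rle_trans. apply (rsum_le _ _ (fun l => 21/10 * (E m l * E l q) + (if Nat.eqb l m then 1071/1000 * E l q else 0))).
  { intros l Hl. rewrite Cmod_mult. pose proof (F2 l Hl). pose proof (F1 l m Hl). fold (b l).
    assert (0 <= Cmod (b l)) by apply Cmod_ge_0. assert (0 <= Cmod (a l m)) by apply Cmod_ge_0.
    pose proof (Epos l q). pose proof (Epos m l).
    destruct (Nat.eqb_spec m l); destruct (Nat.eqb_spec l m); try lia.
    - subst. nra.
    - nra. }
  eapply Rle_trans. apply (rsum_mono_n q n). lia.
  { intros. pose proof (Epos m i). pose proof (Epos i q). destruct (Nat.eqb i m); nra. }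
  rewrite rsum_plus, rsum_scal_l, rsum_delta by lia.
  pose proof (Hconv m q ltac:(lia) Hq). pose proof (Epos m q). nra.
Qed.

Lemma Fcq : cnew n w a q q = RtoC 1.
Proof. destruct IH as [Hs _]. unfold cnew, cd. rewrite Nat.eqb_refl. rewrite csum_zero. ring.
  intros l Hl. rewrite Hs by auto. ring. Qed.

Lemma Fcsupp m : (q < m)%nat -> cnew n w a q m = RtoC 0.
Proof. destruct IH as [Hs _]. intros H. unfold cnew, cd. destruct (Nat.eqb_spec m q). lia. rewrite csum_zero. ring.
  intros l Hl. rewrite Hs by lia. ring. Qed.

Lemma F4 : vnew n w a q = fun j => Cminus (w q j) (csum q (fun l => Cmult (b l) (u l j))).
Proof. apply functional_extensionality. intros j. unfold vnew, comb, cnew.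
  rewrite (csum_ext n _ (fun m => Cminus (Cmult (w m j) (cd m q)) (csum q (fun l => Cmult (b l) (Cmult (a l m) (w m j)))))).
  rewrite csum_minus, csum_delta by auto. f_equal. rewrite csum_swap. apply csum_ext. intros l _.
  unfold uT, comb. rewrite csum_scal_l. auto.
  intros m _. rewrite (csum_ext q (fun l => Cmult (b l) (Cmult (a l m) (w m j))) (fun l => Cmult (Cmult (b l) (a l m)) (w m j))) by (intros; ring).
  rewrite csum_scal_r. unfold b. ring. Qed.

Lemma F5 p : (p < q)%nat -> ip n (u p) (vnew n w a q) = RtoC 0.
Proof. intros Hp. destruct IH as [Hs [Ho _]]. rewrite F4. rewrite ip_lin_r.
  rewrite (csum_ext q _ (fun l => Cmult (b l) (cd l p))).
  rewrite csum_delta by auto. unfold b, bT. ring.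
  intros l Hl. rewrite Ho by auto. rewrite cd_sym. auto. Qed.

Lemma F6 : ip n (vnew n w a q) (vnew n w a q) =
  Cminus (gram n w q q) (RtoC (rsum q (fun l => Cmod (b l) ^ 2))).
Proof. destruct IH as [Hs [Ho _]].
  rewrite F4 at 1. rewrite ip_lin_l.
  rewrite (csum_zero q (fun l => Cmult (Cconj (b l)) (ip n (u l) (vnew n w a q)))).
  2:{ intros l Hl. rewrite F5 by auto. ring. }
  rewrite F4. rewrite ip_lin_r. rewrite RtoC_rsum. unfold gram.
  assert (X : csum q (fun l => Cmult (b l) (ip n (w q) (u l))) = csum q (fun i => RtoC (Cmod (b i) ^ 2))).
  { apply csum_ext. intros l Hl. rewrite <- ip_conj. fold (bT n w a q l). fold (b l).
    rewrite mul_conj_self. auto. }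
  rewrite X. ring. Qed.

Definition s_q := rsum n (fun j => Cmod (vnew n w a q j) ^ 2).

Lemma F7 : Rabs (s_q - 1) <= rsum (S q) (fun r => E r q).
Proof. destruct IH as [Hs [Ho _]].
  assert (Hs' : RtoC s_q = Cminus (gram n w q q) (RtoC (rsum q (fun l => Cmod (b l) ^ 2)))).
  { rewrite <- F6. unfold s_q. rewrite ip_self. auto. }
  assert (Hs2 : s_q = Re (gram n w q q) - rsum q (fun l => Cmod (b l) ^ 2)).
  { change s_q with (Re (RtoC s_q)). rewrite Hs'. unfold Cminus, Cplus, Copp, RtoC, Re; simpl. ring. }
  rewrite Hs2.
  assert (Rabs (Re (gram n w q q) - 1) <= E q q).
  { pose proof (HE q q Hq Hq). unfold cd in H; rewrite Nat.eqb_refl in H.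
    eapply Rle_trans; [|apply H]. eapply Rle_trans; [|apply re_le_Cmod]. simpl. right. f_equal. }
  assert (0 <= rsum q (fun l => Cmod (b l) ^ 2)) by (apply rsum_nonneg; intros; apply pow2_ge_0).
  assert (rsum q (fun l => Cmod (b l) ^ 2) <= rsum q (fun l => (111/10000) * E l q)).
  { apply rsum_le. intros l Hl. pose proof (F2 l Hl). pose proof (Ed0 l q ltac:(lia) Hq).
    pose proof (Cmod_ge_0 (b l)). pose proof (Epos l q). nra. }
  rewrite rsum_scal_l in H1. cbn [rsum].
  assert (0 <= rsum q (fun r => E r q)) by (apply rsum_nonneg; intros; apply Epos).
  apply Rabs_le_inv in H. apply Rabs_le. split; nra.
Qed.

Lemma Fnu : 0 < nu n w a q /\ nu n w a q ^ 2 = s_q /\ Rabs (nu n w a q ^ 2 - 1) <= rsum (S q) (fun r => E r q).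
Proof. pose proof F7. pose proof (HT q Hq). apply Rabs_le_inv in H as H'.
  assert (0 <= s_q) by lra. unfold nu. fold s_q. split. apply sqrt_lt_R0. lra.
  rewrite pow2_sqrt by lra. split; auto. Qed.

Lemma F8 m : a q m = Cdiv (cnew n w a q m) (RtoC (nu n w a q)).
Proof. rewrite acoef_eq. unfold anew. auto. Qed.

Lemma INVS : INV (S q).
Proof. destruct Fnu as [Hnu [Hnu2 Hnub]].
  assert (Hnz : RtoC (nu n w a q) <> RtoC 0). { intros H. apply (f_equal Re) in H. simpl in H. lra. }
  assert (Huq : u q = fun j => Cmult (Cinv (RtoC (nu n w a q))) (vnew n w a q j)).
  { apply functional_extensionality. intros j. unfold uT, comb, vnew, comb. rewrite <- csum_scal_l.
    apply csum_ext. intros m _. rewrite F8. field. auto. }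
  destruct IH as [Hs [Ho [Hb Hd]]].
  assert (Hpq : forall p, (p < q)%nat -> ip n (u p) (u q) = RtoC 0).
  { intros. rewrite Huq, ip_scal_r, F5 by auto. ring. }
  split; [|split; [|split]].
  - intros p m Hp Hm. destruct (Nat.eq_dec p q). subst. rewrite F8, Fcsupp by auto. field. auto.
    apply Hs; lia.
  - intros p p' Hp Hp'.
    destruct (Nat.eq_dec p q); destruct (Nat.eq_dec p' q); subst.
    + rewrite Huq, ip_scal_l, ip_scal_r. fold s_q. rewrite ip_self. fold s_q. rewrite <- Hnu2.
      unfold cd. rewrite Nat.eqb_refl. rewrite <- RtoC_inv by lra.
      apply injective_projections; simpl; field; lra.
    + rewrite <- ip_conj, Hpq by lia. unfold cd. destruct (Nat.eqb_spec q p'). lia.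
      apply injective_projections; simpl; lra.
    + rewrite Hpq by lia. unfold cd. destruct (Nat.eqb_spec p q). lia. auto.
    + apply Ho; lia.
  - intros p m Hp Hm. destruct (Nat.eq_dec p q). subst.
    + rewrite F8, Cmod_div by auto. rewrite Cmod_R, Rabs_pos_eq by lra.
      pose proof (F3 m Hm). pose proof (Epos m q).
      assert (nu n w a q >= 99/100). { destruct (Rlt_or_le (nu n w a q) (99/100)); [|lra].
        apply Rabs_le_inv in Hnub. pose proof (HT q Hq). nra. }
      apply Rmult_le_reg_r with (nu n w a q). lra. unfold Rdiv. rewrite Rmult_assoc, Rinv_l by lra.
      pose proof (Cmod_ge_0 (cnew n w a q m)). nra.
    + apply Hb; lia.
  - intros p Hp. destruct (Nat.eq_dec p q). subst.
    + rewrite F8, Fcq. replace (Cminus (Cdiv (RtoC 1) (RtoC (nu n w a q))) (RtoC 1)) with (RtoC (/ nu n w a q - 1)).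
      rewrite Cmod_R. apply inv_bound; auto.
      apply injective_projections; simpl; field; lra.
    + apply Hd; lia.
Qed.
End StepQ.

Lemma INV_all q : (q <= n)%nat -> INV q.
Proof. induction q; intros H. apply INV0. apply INVS. lia. apply IHq. lia. Qed.
End Step.

Definition pos (p : nat) : Z :=
  let z := Z.of_nat p in if Z.eqb (z mod 2) 0 then (z / 2)%Z else (- ((z + 1) / 2))%Z.
Definition rank (k : Z) : nat := Z.to_nat (if Z.leb 0 k then 2 * k else - 2 * k - 1)%Z.

Ltac zdiv := unfold pos, rank in *;
  repeat match goal with
  | |- context [Z.eqb ?a ?b] => destruct (Z.eqb_spec a b)
  | H : context [Z.eqb ?a ?b] |- _ => destruct (Z.eqb_spec a b)
  | |- context [Z.leb ?a ?b] => destruct (Z.leb_spec a b)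
  | H : context [Z.leb ?a ?b] |- _ => destruct (Z.leb_spec a b)
  end; Z.div_mod_to_equations; lia.

Lemma rank_pos p : rank (pos p) = p.
Proof. unfold pos. destruct (Z.eqb_spec (Z.of_nat p mod 2) 0).
  - unfold rank. destruct (Z.leb_spec 0 (Z.of_nat p / 2)). 2: (Z.div_mod_to_equations; lia).
    apply Nat2Z.inj. rewrite Z2Nat.id by lia. Z.div_mod_to_equations; lia.
  - unfold rank. destruct (Z.leb_spec 0 (- ((Z.of_nat p + 1) / 2))).
    + Z.div_mod_to_equations; lia.
    + apply Nat2Z.inj. rewrite Z2Nat.id by (Z.div_mod_to_equations; lia). Z.div_mod_to_equations; lia. Qed.

Lemma pos_rank k : pos (rank k) = k.
Proof. unfold rank. destruct (Z.leb_spec 0 k); unfold pos.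
  - rewrite Z2Nat.id by lia. destruct (Z.eqb_spec ((2 * k) mod 2) 0); Z.div_mod_to_equations; lia.
  - rewrite Z2Nat.id by lia. destruct (Z.eqb_spec ((-2 * k - 1) mod 2) 0); Z.div_mod_to_equations; lia. Qed.

Lemma pos_bound (N p : nat) : (p < 2 * N + 1)%nat -> (- Z.of_nat N <= pos p <= Z.of_nat N)%Z.
Proof. intros H. unfold pos. destruct (Z.eqb_spec (Z.of_nat p mod 2) 0); Z.div_mod_to_equations; lia. Qed.

Lemma rank_bound (N : nat) k : (- Z.of_nat N <= k <= Z.of_nat N)%Z -> (rank k < 2 * N + 1)%nat.
Proof. intros H. unfold rank. destruct (Z.leb_spec 0 k); lia. Qed.

Lemma rank_le k : (rank k <= 2 * Z.abs_nat k)%nat.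
Proof. unfold rank. destruct (Z.leb_spec 0 k); lia. Qed.

Lemma pos_inj p p' : pos p = pos p' -> p = p'.
Proof. intros H. rewrite <- (rank_pos p), <- (rank_pos p'), H. auto. Qed.
Lemma rank_inj k k' : rank k = rank k' -> k = k'.
Proof. intros H. rewrite <- (pos_rank k), <- (pos_rank k'), H. auto. Qed.

Lemma pos_even M : pos (2 * M) = Z.of_nat M.
Proof. unfold pos. destruct (Z.eqb_spec (Z.of_nat (2*M) mod 2) 0); Z.div_mod_to_equations; lia. Qed.
Lemma pos_odd M : pos (2 * M + 1) = (- Z.of_nat (S M))%Z.
Proof. unfold pos. destruct (Z.eqb_spec (Z.of_nat (2*M+1) mod 2) 0); Z.div_mod_to_equations; lia. Qed.

Lemma Zinterval_back a b : (a <= b + 1)%Z -> Zinterval a (b + 1) = Zinterval a b ++ (b + 1)%Z :: nil.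
Proof. intros H. unfold Zinterval.
  replace (Z.to_nat (b + 1 - a + 1)) with (S (Z.to_nat (b - a + 1))) by lia.
  rewrite seq_S, map_app. simpl. f_equal. f_equal. lia. Qed.

Lemma Zinterval_front a b : (a <= b + 1)%Z -> Zinterval (a - 1) b = (a - 1)%Z :: Zinterval a b.
Proof. intros H. unfold Zinterval.
  replace (Z.to_nat (b - (a - 1) + 1)) with (S (Z.to_nat (b - a + 1))) by lia.
  simpl. f_equal. lia. rewrite <- seq_shift, map_map. apply map_ext. intros. lia. Qed.

Lemma Zinterval_sym (M : nat) : Zinterval (- Z.of_nat (S M)) (Z.of_nat (S M)) =
  (- Z.of_nat (S M))%Z :: Zinterval (- Z.of_nat M) (Z.of_nat M) ++ (Z.of_nat (S M)) :: nil.
Proof. replace (- Z.of_nat (S M))%Z with (- Z.of_nat M - 1)%Z by lia.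
  rewrite Zinterval_front by lia. f_equal.
  replace (Z.of_nat (S M)) with (Z.of_nat M + 1)%Z by lia. rewrite Zinterval_back by lia. auto. Qed.

Lemma Zinterval_sym0 : Zinterval (- Z.of_nat 0) (Z.of_nat 0) = 0%Z :: nil.
Proof. reflexivity. Qed.

Lemma sumR_sym M f : sumR (- Z.of_nat M) (Z.of_nat M) f = rsum (2 * M + 1) (fun p => f (pos p)).
Proof. induction M.
  - unfold sumR. rewrite Zinterval_sym0. simpl. replace (pos 0) with 0%Z by reflexivity. lra.
  - unfold sumR in *. rewrite Zinterval_sym. rewrite map_cons, map_app. cbn [fold_right]. rewrite fold_right_app.
    cbn [map fold_right].
    replace (2 * S M + 1)%nat with (S (S (2 * M + 1))) by lia. cbn [rsum].
    rewrite <- IHM. rewrite pos_odd. replace (S (2 * M + 1)) with (2 * (S M))%nat by lia. rewrite pos_even.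
    assert (forall l x, fold_right Rplus x l = fold_right Rplus 0 l + x).
    { induction l; simpl; intros; [lra|]. rewrite IHl. lra. }
    rewrite H. lra. Qed.

Lemma fold_Rplus_shift l x : fold_right Rplus x l = fold_right Rplus 0 l + x.
Proof. induction l; simpl; [lra|]. rewrite IHl. lra. Qed.

Lemma sumR_half M f : sumR (- Z.of_nat M) (Z.of_nat M - 1) f = rsum (2 * M) (fun p => f (pos p)).
Proof. pose proof (sumR_sym M f) as H. unfold sumR in *.
  replace (Z.of_nat M) with (Z.of_nat M - 1 + 1)%Z in H at 2 by lia.
  rewrite Zinterval_back in H by lia. rewrite map_app, fold_right_app in H. cbn [map fold_right] in H.
  rewrite fold_Rplus_shift in H. replace (2 * M + 1)%nat with (S (2 * M)) in H by lia. cbn [rsum] in H.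
  rewrite pos_even in H. replace (Z.of_nat M - 1 + 1)%Z with (Z.of_nat M) in H by lia. lra. Qed.

Lemma fold_Cplus_shift l x : fold_right Cplus x l = Cplus (fold_right Cplus (RtoC 0) l) x.
Proof. induction l; simpl. ring. rewrite IHl. ring. Qed.

Lemma sumC_sym M f : sumC (- Z.of_nat M) (Z.of_nat M) f = csum (2 * M + 1) (fun p => f (pos p)).
Proof. induction M.
  - unfold sumC. rewrite Zinterval_sym0. simpl. replace (pos 0) with 0%Z by reflexivity. ring.
  - unfold sumC in *. rewrite Zinterval_sym. rewrite map_cons, map_app. cbn [fold_right]. rewrite fold_right_app.
    cbn [map fold_right].
    replace (2 * S M + 1)%nat with (S (S (2 * M + 1))) by lia. cbn [csum].
    rewrite <- IHM. rewrite pos_odd. replace (S (2 * M + 1)) with (2 * (S M))%nat by lia. rewrite pos_even.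
    rewrite fold_Cplus_shift. ring. Qed.

Definition pairseq (a : Z -> R) (n : nat) : R :=
  if Nat.eqb n 0 then a 0%Z else a (Z.of_nat n) + a (- Z.of_nat n)%Z.

Lemma sum_n_pairseq a M : sum_n (pairseq a) M = rsum (2 * M + 1) (fun p => a (pos p)).
Proof. induction M.
  - rewrite sum_O. simpl. replace (pos 0) with 0%Z by reflexivity. unfold pairseq. simpl. lra.
  - rewrite sum_Sn, IHM. replace (2 * S M + 1)%nat with (S (S (2 * M + 1))) by lia. cbn [rsum].
    rewrite pos_odd. replace (S (2 * M + 1)) with (2 * (S M))%nat by lia. rewrite pos_even.
    unfold pairseq. simpl Nat.eqb. cbv iota. unfold plus. simpl. lra. Qed.

Lemma series_lim (B : nat -> R) sb : is_series B sb -> is_lim_seq (sum_n B) sb.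
Proof. intros H. exact H. Qed.

Lemma sum_n_mono (B : nat -> R) M M' : (forall n, 0 <= B n) -> (M <= M')%nat -> sum_n B M <= sum_n B M'.
Proof. intros H Hle. induction Hle. lra. rewrite sum_Sn. unfold plus; simpl. pose proof (H (S m)). lra. Qed.

Lemma series_partial_le (B : nat -> R) sb M : is_series B sb -> (forall n, 0 <= B n) -> sum_n B M <= sb.
Proof. intros H Hp. apply series_lim in H.
  assert (Rbar_le (sum_n B M) sb).
  { apply (is_lim_seq_le_loc (fun _ => sum_n B M) (sum_n B)). exists M. intros. apply sum_n_mono; auto.
    apply is_lim_seq_const. auto. }
  simpl in H0. auto. Qed.

Lemma tail_bound (A B : nat -> R) s sb N : is_series A s -> is_series B sb ->
  (forall n, (N < n)%nat -> Rabs (A n) <= B n) -> (forall n, 0 <= B n) ->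
  Rabs (s - sum_n A N) <= sb.
Proof. intros HA HB Hd Hp.
  assert (Hm : forall M, (N <= M)%nat -> Rabs (sum_n A M - sum_n A N) <= sum_n B M - sum_n B N).
  { intros M HM. induction HM. rewrite Rminus_diag, Rabs_R0. lra.
    rewrite !sum_Sn. unfold plus; simpl.
    replace (sum_n A m + A (S m) - sum_n A N) with ((sum_n A m - sum_n A N) + A (S m)) by ring.
    eapply Rle_trans. apply Rabs_triang. pose proof (Hd (S m) ltac:(lia)). lra. }
  apply series_lim in HA.
  assert (Hl : is_lim_seq (fun M => Rabs (sum_n A M - sum_n A N)) (Rabs (s - sum_n A N))).
  { apply (is_lim_seq_abs _ (s - sum_n A N)). apply is_lim_seq_minus'. auto. apply is_lim_seq_const. }
  assert (Rbar_le (Rabs (s - sum_n A N)) sb).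
  { apply (is_lim_seq_le_loc (fun M => Rabs (sum_n A M - sum_n A N)) (fun _ => sb) _ _). exists N. intros M HM.
    pose proof (Hm M HM). pose proof (series_partial_le B sb M HB Hp).
    pose proof (sum_n_mono B 0 N Hp ltac:(lia)). rewrite sum_O in H1. pose proof (Hp 0%nat). lra.
    auto. apply is_lim_seq_const. }
  simpl in H. auto. Qed.

Lemma jbr_ge1 k : 1 <= jbr k.
Proof. unfold jbr. pose proof (IZR_le 0 (Z.abs k) (Z.abs_nonneg k)). lra. Qed.
Lemma jbr_sym a b : jbr (a - b) = jbr (b - a).
Proof. unfold jbr. f_equal. f_equal. lia. Qed.
Lemma Rpower_pos x y : 0 < Rpower x y.
Proof. unfold Rpower. apply exp_pos. Qed.
Lemma Rpower_ge1 x y : 1 <= x -> 0 <= y -> 1 <= Rpower x y.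
Proof. intros. rewrite <- (Rpower_O x) by lra. apply Rle_Rpower; lra. Qed.
Lemma Rpower_1_base y : Rpower 1 y = 1.
Proof. unfold Rpower. rewrite ln_1, Rmult_0_r, exp_0. auto. Qed.
Lemma exp_neg_le1 b z : 0 <= b -> exp (- b * IZR (Z.abs z)) <= 1.
Proof. intros. rewrite <- exp_0. pose proof (IZR_le 0 (Z.abs z) (Z.abs_nonneg z)).
  destruct (Req_dec (- b * IZR (Z.abs z)) 0) as [E|E]. rewrite E; lra.
  left. apply exp_increasing. nra. Qed.
Lemma exp_le1 x : x <= 0 -> exp x <= 1.
Proof. intros. rewrite <- exp_0. destruct (Req_dec x 0) as [E|E]. rewrite E; lra. left. apply exp_increasing. lra. Qed.
Lemma pairseq_nonneg f : (forall j, 0 <= f j) -> forall n, 0 <= pairseq f n.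
Proof. intros H n. unfold pairseq. destruct (Nat.eqb n 0). auto. pose proof (H (Z.of_nat n)); pose proof (H (- Z.of_nat n)%Z). lra. Qed.
Lemma sqrt2_le2 : sqrt 2 <= 2.
Proof. pose proof Rlt_sqrt2_0. pose proof (sqrt_sqrt 2 ltac:(lra)). nra. Qed.

Definition Tfun (beta nu : R) (s m : Z) (k : Z) : R :=
  exp (- beta * IZR (Z.abs (s - k)) - beta * IZR (Z.abs (k - m)))
  / (Rpower (jbr (s - k)) nu * Rpower (jbr (k - m)) nu).

Lemma Tfun_nonneg beta nu s m k : 0 <= Tfun beta nu s m k.
Proof. unfold Tfun. apply Rlt_le. apply Rdiv_lt_0_compat. apply exp_pos. apply Rmult_lt_0_compat; apply Rpower_pos. Qed.

Lemma cnu_pos nu cnu : is_c_nu nu cnu -> 0 < cnu.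
Proof. intros H. destruct (H 0 (Rle_refl 0) 0%Z 0%Z) as [S [HS HSle]].
  unfold ZsumR in HS. fold (pairseq (Tfun 0 nu 0 0)) in HS.
  pose proof (series_partial_le _ _ 0 HS (pairseq_nonneg _ (Tfun_nonneg 0 nu 0 0))).
  rewrite sum_O in H0. unfold pairseq, Tfun in H0. simpl in H0.
  unfold jbr in *. simpl in *. rewrite !Rplus_0_l, Rpower_1_base in *.
  replace (- 0 * 0 - 0 * 0) with 0 in H0 by ring. replace (- 0 * 0) with 0 in HSle by ring.
  rewrite exp_0 in *. lra. Qed.

Lemma Nmodel_zero h v j k : j <> k -> (- j)%Z <> k -> Nmodel h v j k = RtoC 0.
Proof. intros H1 H2. unfold Nmodel, kdelta. destruct (Z.eq_dec j k); [lia|]. destruct (Z.eq_dec (-j) k); [lia|]. ring. Qed.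

Section An.
Variables (h alpha beta c cnu : R) (v : Z -> R -> C) (NN : Z -> Z -> C) (N : nat).
Hypothesis halpha : 2 < alpha.
Hypothesis hbeta : 0 <= beta.
Hypothesis hc : 0 < c.
Hypothesis hcnu : is_c_nu (alpha - 1) cnu.
Hypothesis hNN : unitary_Z NN.
Hypothesis hbound : forall j k : Z,
     Cmod (Cminus (NN j k) (Nmodel h v j k))
     <= c * exp (- beta * IZR (Z.abs (j - k)))
        / (jbr j * jbr k * Rpower (jbr (j - k)) (alpha - 1)).

Let eps := eps_jk c cnu alpha beta N.
Let Q := (INR N + 1) ^ 2.

Lemma Q_pos : 0 < Q.
Proof. unfold Q. pose proof (pos_INR N). nra. Qed.

Lemma eps_nonneg l k : 0 <= eps l k.
Proof. unfold eps, eps_jk. pose proof (cnu_pos _ _ hcnu). pose proof (jbr_ge1 l). pose proof (jbr_ge1 k).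
  pose proof Q_pos. pose proof (Rpower_pos (jbr (l - k)) (alpha - 1)). pose proof (exp_pos (- beta * IZR (Z.abs (l - k)))).
  apply Rlt_le. apply Rdiv_lt_0_compat. apply Rmult_lt_0_compat; [|lra]. apply Rmult_lt_0_compat; nra.
  fold Q. apply Rmult_lt_0_compat; [|lra]. apply Rmult_lt_0_compat; [|lra]. nra. Qed.

Lemma eps_sym l k : eps l k = eps k l.
Proof. unfold eps, eps_jk. rewrite (jbr_sym l k). replace (Z.abs (l - k)) with (Z.abs (k - l)) by lia.
  f_equal. ring. Qed.

Lemma eps_le l k : eps l k <= c ^ 2 * cnu / Q.
Proof. unfold eps, eps_jk. fold Q. pose proof (cnu_pos _ _ hcnu). pose proof (jbr_ge1 l). pose proof (jbr_ge1 k).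
  pose proof Q_pos. pose proof (Rpower_ge1 (jbr (l - k)) (alpha - 1) (jbr_ge1 _) ltac:(lra)).
  pose proof (exp_neg_le1 beta (l - k) hbeta). pose proof (exp_pos (- beta * IZR (Z.abs (l - k)))).
  set (e := exp _) in *. set (P := Rpower _ _) in *.
  assert (HA : jbr l * jbr k >= 1) by nra.
  assert (HB : jbr l * jbr k * Q >= Q) by nra.
  assert (HC : jbr l * jbr k * Q * P >= Q) by nra.
  assert (0 < c ^ 2) by (apply pow_lt; lra).
  unfold Rdiv. apply Rmult_le_compat.
  - apply Rlt_le. apply Rmult_lt_0_compat; [|lra]. apply Rmult_lt_0_compat; lra.
  - apply Rlt_le, Rinv_0_lt_compat. lra.
  - rewrite <- (Rmult_1_r (c ^ 2 * cnu)) at 2. apply Rmult_le_compat_l; nra.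
  - apply Rinv_le_contravar; lra. Qed.

Lemma NN_far j k : (Z.of_nat N < Z.abs j)%Z -> (Z.abs k <= Z.of_nat N)%Z ->
  Cmod (NN j k) <= c * exp (- beta * IZR (Z.abs (j - k))) / (jbr j * jbr k * Rpower (jbr (j - k)) (alpha - 1)).
Proof. intros H1 H2. pose proof (hbound j k). rewrite Nmodel_zero in H by lia.
  replace (Cminus (NN j k) (RtoC 0)) with (NN j k) in H by ring. auto. Qed.

Lemma jbr_far j : (Z.of_nat N < Z.abs j)%Z -> INR N + 1 <= jbr j.
Proof. intros H. unfold jbr. rewrite INR_IZR_INZ. apply Rplus_le_compat_r. apply IZR_le. lia. Qed.

Lemma prod_far j k l : (Z.of_nat N < Z.abs j)%Z -> (Z.abs k <= Z.of_nat N)%Z -> (Z.abs l <= Z.of_nat N)%Z ->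
  Cmod (NN j k) * Cmod (NN j l) <= (c ^ 2 / (jbr k * jbr l * Q)) * Tfun beta (alpha - 1) k l j.
Proof. intros Hj Hk Hl. pose proof (NN_far j k Hj Hk) as A1. pose proof (NN_far j l Hj Hl) as A2.
  pose proof (jbr_far j Hj) as HJ. pose proof (pos_INR N).
  pose proof (jbr_ge1 j). pose proof (jbr_ge1 k). pose proof (jbr_ge1 l).
  pose proof (Rpower_pos (jbr (j - k)) (alpha - 1)). pose proof (Rpower_pos (jbr (j - l)) (alpha - 1)).
  set (e1 := exp (- beta * IZR (Z.abs (j - k)))) in *. set (e2 := exp (- beta * IZR (Z.abs (j - l)))) in *.
  assert (0 < e1) by apply exp_pos. assert (0 < e2) by apply exp_pos.
  set (Pk := Rpower (jbr (j - k)) (alpha - 1)) in *. set (Pl := Rpower (jbr (j - l)) (alpha - 1)) in *.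
  eapply Rle_trans. apply Rmult_le_compat; try apply Cmod_ge_0; eauto.
  unfold Tfun. rewrite (jbr_sym k j). replace (Z.abs (k - j)) with (Z.abs (j - k)) by lia.
  replace (- beta * IZR (Z.abs (j - k)) - beta * IZR (Z.abs (j - l))) with
    ((- beta * IZR (Z.abs (j - k))) + (- beta * IZR (Z.abs (j - l)))) by ring.
  rewrite exp_plus. fold e1 e2 Pk Pl.
  set (X := c ^ 2 * (e1 * e2) / (jbr k * jbr l * Pk * Pl)).
  assert (0 <= X). { unfold X. apply Rlt_le. apply Rdiv_lt_0_compat. assert (0 < c ^ 2) by (apply pow_lt; lra). apply Rmult_lt_0_compat; [lra|]. apply Rmult_lt_0_compat; lra.
    assert (0 < jbr k * jbr l) by nra. assert (0 < jbr k * jbr l * Pk) by nra. nra. }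
  replace (c * e1 / (jbr j * jbr k * Pk) * (c * e2 / (jbr j * jbr l * Pl))) with (X * / (jbr j ^ 2)).
  replace (c ^ 2 / (jbr k * jbr l * Q) * (e1 * e2 / (Pk * Pl))) with (X * / Q).
  apply Rmult_le_compat_l; auto. apply Rinv_le_contravar. apply Q_pos. unfold Q. nra.
  unfold X. field. pose proof Q_pos. repeat split; lra.
  unfold X. field. repeat split; lra. Qed.

Lemma half_tail (f : Z -> R) s k l : ZsumR f s ->
  (forall j, (Z.of_nat N < Z.abs j)%Z -> Rabs (f j) <= Cmod (NN j k) * Cmod (NN j l)) ->
  (Z.abs k <= Z.of_nat N)%Z -> (Z.abs l <= Z.of_nat N)%Z ->
  Rabs (s - rsum (2 * N + 1) (fun p => f (pos p))) <= eps k l.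
Proof. intros Hf Hd Hk Hl.
  destruct (hcnu beta hbeta k l) as [S [HS HSle]].
  assert (HS' : is_series (pairseq (Tfun beta (alpha - 1) k l)) S) by exact HS.
  set (K := c ^ 2 / (jbr k * jbr l * Q)).
  assert (HK : 0 <= K). { unfold K. pose proof (jbr_ge1 k). pose proof (jbr_ge1 l). pose proof Q_pos.
    apply Rlt_le, Rdiv_lt_0_compat. apply pow_lt; lra. assert (0 < jbr k * jbr l) by nra. nra. }
  assert (HB : is_series (fun n => K * pairseq (Tfun beta (alpha - 1) k l) n) (K * S)).
  { exact (is_series_scal_l K _ _ HS'). }
  rewrite <- sum_n_pairseq.
  eapply Rle_trans. apply (tail_bound (pairseq f) _ s (K * S) N Hf HB).
  - intros n Hn. unfold pairseq. destruct (Nat.eqb_spec n 0). lia.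
    eapply Rle_trans. apply Rabs_triang. rewrite Rmult_plus_distr_l.
    apply Rplus_le_compat.
    + eapply Rle_trans. apply Hd. lia. apply prod_far; lia.
    + eapply Rle_trans. apply Hd. lia. apply prod_far; lia.
  - intros n. apply Rmult_le_pos; auto. apply pairseq_nonneg. apply Tfun_nonneg.
  - eapply Rle_trans. apply Rmult_le_compat_l; [auto|apply HSle].
    unfold K, eps, eps_jk. fold Q. right. field.
    pose proof (jbr_ge1 k). pose proof (jbr_ge1 l). pose proof Q_pos. pose proof (Rpower_pos (jbr (k - l)) (alpha - 1)).
    repeat split; lra.
Qed.

Lemma gram_tail k l : (Z.abs k <= Z.of_nat N)%Z -> (Z.abs l <= Z.of_nat N)%Z ->
  Cmod (Cminus (csum (2 * N + 1) (fun i => Cmult (Cconj (NN (pos i) k)) (NN (pos i) l))) (RtoC (kdelta k l)))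
  <= 2 * eps k l.
Proof. intros Hk Hl. destruct hNN as [H1 _]. destruct (H1 k l) as [HR HI].
  set (F := fun j => Cmult (Cconj (NN j k)) (NN j l)) in *.
  change (csum (2*N+1) (fun i => Cmult (Cconj (NN (pos i) k)) (NN (pos i) l))) with (csum (2*N+1) (fun i => F (pos i))).
  assert (Hd : forall j, Cmod (F j) = Cmod (NN j k) * Cmod (NN j l)).
  { intros. unfold F. rewrite Cmod_mult, Cmod_conj. auto. }
  pose proof (half_tail (fun j => Re (F j)) _ k l HR) as A.
  pose proof (half_tail (fun j => Im (F j)) _ k l HI) as B.
  assert (A' : Rabs (Re (RtoC (kdelta k l)) - Re (csum (2 * N + 1) (fun i => F (pos i)))) <= eps k l).
  { rewrite Re_csum. apply A; auto. intros. rewrite <- Hd. apply re_le_Cmod. }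
  assert (B' : Rabs (Im (RtoC (kdelta k l)) - Im (csum (2 * N + 1) (fun i => F (pos i)))) <= eps k l).
  { rewrite Im_csum. apply B; auto. intros. rewrite <- Hd. eapply Rle_trans; [|apply Rmax_Cmod]. apply Rmax_r. }
  eapply Rle_trans. apply Cmod_2Rmax.
  assert (Rmax (Rabs (fst (Cminus (csum (2 * N + 1) (fun i => F (pos i))) (RtoC (kdelta k l)))))
               (Rabs (snd (Cminus (csum (2 * N + 1) (fun i => F (pos i))) (RtoC (kdelta k l))))) <= eps k l).
  { apply Rmax_lub.
    - replace (fst _) with (- (Re (RtoC (kdelta k l)) - Re (csum (2 * N + 1) (fun i => F (pos i))))).
      rewrite Rabs_Ropp. auto. unfold Re. simpl. ring.
    - replace (snd _) with (- (Im (RtoC (kdelta k l)) - Im (csum (2 * N + 1) (fun i => F (pos i))))).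
      rewrite Rabs_Ropp. auto. unfold Im. simpl. ring. }
  pose proof sqrt2_le2. pose proof Rlt_sqrt2_0. pose proof (eps_nonneg k l).
  assert (0 <= Rmax (Rabs (fst (Cminus (csum (2 * N + 1) (fun i => F (pos i))) (RtoC (kdelta k l)))))
               (Rabs (snd (Cminus (csum (2 * N + 1) (fun i => F (pos i))) (RtoC (kdelta k l)))))).
  { eapply Rle_trans. apply Rabs_pos. apply Rmax_l. }
  nra. Qed.

Lemma conv k l : rsum (2 * N + 1) (fun r => eps k (pos r) * eps (pos r) l) <= (c ^ 2 * cnu ^ 2 / Q) * eps k l.
Proof.
  destruct (hcnu beta hbeta k l) as [S [HS HSle]].
  assert (HS' : is_series (pairseq (Tfun beta (alpha - 1) k l)) S) by exact HS.
  pose proof (cnu_pos _ _ hcnu) as Hcnu.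
  set (K := c ^ 4 * cnu ^ 2 / (Q ^ 2 * jbr k * jbr l)).
  pose proof (jbr_ge1 k). pose proof (jbr_ge1 l). pose proof Q_pos.
  assert (HK : 0 <= K). { unfold K. apply Rlt_le, Rdiv_lt_0_compat.
    apply Rmult_lt_0_compat; apply pow_lt; lra. assert (0 < Q ^ 2) by (apply pow_lt; lra).
    assert (0 < Q ^ 2 * jbr k) by nra. nra. }
  eapply Rle_trans. apply (rsum_le _ _ (fun r => K * Tfun beta (alpha - 1) k l (pos r))).
  { intros r _. set (m := pos r). unfold eps, eps_jk, Tfun. fold Q.
    pose proof (jbr_ge1 m).
    pose proof (Rpower_pos (jbr (k - m)) (alpha - 1)). pose proof (Rpower_pos (jbr (m - l)) (alpha - 1)).
    set (e1 := exp (- beta * IZR (Z.abs (k - m)))) in *. set (e2 := exp (- beta * IZR (Z.abs (m - l)))) in *.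
    assert (0 < e1) by apply exp_pos. assert (0 < e2) by apply exp_pos.
    replace (- beta * IZR (Z.abs (k - m)) - beta * IZR (Z.abs (m - l))) with
      ((- beta * IZR (Z.abs (k - m))) + (- beta * IZR (Z.abs (m - l)))) by ring.
    rewrite exp_plus. fold e1 e2.
    set (Pk := Rpower (jbr (k - m)) (alpha - 1)) in *. set (Pl := Rpower (jbr (m - l)) (alpha - 1)) in *.
    set (X := K * (e1 * e2 / (Pk * Pl))).
    assert (0 <= X). { unfold X. apply Rmult_le_pos; auto. apply Rlt_le, Rdiv_lt_0_compat; apply Rmult_lt_0_compat; lra. }
    replace (c ^ 2 * cnu * e1 / (jbr k * jbr m * Q * Pk) * (c ^ 2 * cnu * e2 / (jbr m * jbr l * Q * Pl)))
      with (X * / (jbr m ^ 2)).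
    rewrite <- (Rmult_1_r X) at 2. apply Rmult_le_compat_l; auto.
    rewrite <- Rinv_1. apply Rinv_le_contravar. lra. nra.
    unfold X, K. field. repeat split; lra. }
  rewrite rsum_scal_l. rewrite <- sum_n_pairseq.
  pose proof (series_partial_le _ _ N HS' (pairseq_nonneg _ (Tfun_nonneg beta (alpha - 1) k l))).
  eapply Rle_trans. apply Rmult_le_compat_l; [auto|]. eapply Rle_trans. apply H2. apply HSle.
  unfold K, eps, eps_jk. fold Q. right. field.
  pose proof (Rpower_pos (jbr (k - l)) (alpha - 1)). repeat split; lra.
Qed.
End An.

Lemma rsum_const m x : rsum m (fun _ => x) = INR m * x.
Proof. induction m; simpl rsum. simpl; lra. rewrite IHm, S_INR. lra. Qed.

Lemma rsum_restrict n p f : (p <= n)%nat -> rsum n (fun m => if Nat.ltb m p then f m else 0) = rsum p f.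
Proof. intros H. induction H. apply rsum_ext. intros i Hi. destruct (Nat.ltb_spec i p); [auto|lia].
  cbn [rsum]. rewrite IHle. destruct (Nat.ltb_spec m p); [lia|]. lra. Qed.

Lemma cd_kdelta p q : cd p q = RtoC (kdelta (pos p) (pos q)).
Proof. unfold cd, kdelta. destruct (Nat.eqb_spec p q); destruct (Z.eq_dec (pos p) (pos q)); subst; auto.
  exfalso. auto. apply pos_inj in e. contradiction. Qed.

Lemma large_N (x : R) : exists N0 : nat, forall N, (N0 <= N)%nat -> x < INR N + 1.
Proof. destruct (archimed x) as [H1 _]. exists (Z.to_nat (up x)). intros N HN.
  apply le_INR in HN. rewrite INR_IZR_INZ in HN. assert (IZR (up x) <= IZR (Z.of_nat (Z.to_nat (up x)))).
  { apply IZR_le. lia. } lra. Qed.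

Theorem mainTheorem11
  (h alpha beta c cnu : R) (v : Z -> R -> C) (NN : Z -> Z -> C)
  (hh : 0 < h) (halpha : 2 < alpha) (hbeta : 0 <= beta) (hc : 0 < c)
  (hcnu : is_c_nu (alpha - 1) cnu)
  (hv : potential_coeffs v)
  (hNN : unitary_Z NN)
  (hbound : forall j k : Z,
     Cmod (Cminus (NN j k) (Nmodel h v j k))
     <= c * exp (- beta * IZR (Z.abs (j - k)))
        / (jbr j * jbr k * Rpower (jbr (j - k)) (alpha - 1))) :
  exists N0 : nat, forall N : nat, (N0 <= N)%nat ->
    exists U : Z -> Z -> C,
      unitary_fin (Z.of_nat N) U /\
      forall j k : Z,
        (- Z.of_nat N <= j <= Z.of_nat N)%Z -> (- Z.of_nat N <= k <= Z.of_nat N)%Z ->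
        Cmod (Cminus (U j k) (NN j k))
        <= sigma_k c cnu alpha beta N k * Cmod (NN j k)
           + sumR (- Z.abs k) (Z.abs k - 1)
               (fun l => if Z.eq_dec l k then 0
                         else 4 * eps_jk c cnu alpha beta N l k * Cmod (NN j l)).
Proof.
  pose proof (cnu_pos _ _ hcnu) as Hcnu.
  set (A := c ^ 2 * cnu). set (B := c ^ 2 * cnu ^ 2).
  assert (HA : 0 < A) by (unfold A; apply Rmult_lt_0_compat; [apply pow_lt|]; lra).
  assert (HB : 0 < B) by (unfold B; apply Rmult_lt_0_compat; apply pow_lt; lra).
  destruct (large_N (400 * (A + B))) as [N0 HN0]. exists N0. intros N HN.
  specialize (HN0 N HN).
  set (n := (2 * N + 1)%nat).
  set (w := fun m i => NN (pos i) (pos m)).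
  set (eps := eps_jk c cnu alpha beta N).
  set (Q := (INR N + 1) ^ 2).
  set (E := fun p q => 2 * eps (pos p) (pos q)).
  pose proof (pos_INR N) as HNpos.
  assert (Epsnn : forall l k, 0 <= eps l k) by (intros; eapply eps_nonneg; eauto).
  assert (Epssym : forall l k, eps l k = eps k l) by (intros; eapply eps_sym; eauto).
  assert (Epsle : forall l k, eps l k <= c ^ 2 * cnu / Q) by (intros; eapply eps_le; eauto).
  assert (Econv : forall k l, rsum (2 * N + 1) (fun r => eps k (pos r) * eps (pos r) l) <= (c ^ 2 * cnu ^ 2 / Q) * eps k l)
    by (intros; eapply conv; eauto).
  assert (Egram : forall k l, (Z.abs k <= Z.of_nat N)%Z -> (Z.abs l <= Z.of_nat N)%Z ->
    Cmod (Cminus (csum (2 * N + 1) (fun i => Cmult (Cconj (NN (pos i) k)) (NN (pos i) l))) (RtoC (kdelta k l))) <= 2 * eps k l)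
    by (intros; eapply gram_tail; eauto).
  assert (HQ : INR N + 1 <= Q) by (unfold Q; nra).
  assert (HQpos : 0 < Q) by lra.
  assert (HINV : INV n w E n).
  { apply (INV_all n w E (2 * A / Q) (2 * B / Q)).
    - intros p q Hp Hq. unfold gram, ip, w, E. rewrite cd_kdelta.
      pose proof (pos_bound N p Hp). pose proof (pos_bound N q Hq).
      apply Egram; lia.
    - intros. unfold E. rewrite Epssym. auto.
    - intros. unfold E. pose proof (Epsnn (pos p) (pos q)). lra.
    - intros. unfold E. pose proof (Epsle (pos p) (pos q)). fold A in H1. unfold Rdiv in *. lra.
    - assert (2 * A / Q <= 2 * A / (INR N + 1)). { unfold Rdiv. apply Rmult_le_compat_l. lra. apply Rinv_le_contravar; lra. }
      assert (2 * A / (INR N + 1) <= 1/100). { apply Rmult_le_reg_r with (INR N + 1). lra. unfold Rdiv. rewrite Rmult_assoc, Rinv_l by lra. nra. }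
      lra.
    - intros p q Hp Hq. unfold E.
      rewrite (rsum_ext _ _ (fun r => 4 * (eps (pos p) (pos r) * eps (pos r) (pos q)))) by (intros; ring).
      rewrite rsum_scal_l. pose proof (Econv (pos p) (pos q)). fold B in H. unfold n. unfold Rdiv in *. nra.
    - split. apply Rlt_le, Rdiv_lt_0_compat; lra.
      assert (2 * B / Q <= 2 * B / (INR N + 1)). { unfold Rdiv. apply Rmult_le_compat_l. lra. apply Rinv_le_contravar; lra. }
      assert (2 * B / (INR N + 1) <= 1/100). { apply Rmult_le_reg_r with (INR N + 1). lra. unfold Rdiv. rewrite Rmult_assoc, Rinv_l by lra. nra. }
      lra.
    - intros q Hq. eapply Rle_trans. apply (rsum_le _ _ (fun _ => 2 * A / Q)).
      { intros. unfold E. pose proof (Epsle (pos i) (pos q)). fold A in H0.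
        unfold Rdiv in *. lra. }
      rewrite rsum_const. assert (INR (S q) <= 2 * INR N + 1).
      { replace (2 * INR N + 1) with (INR n) by (unfold n; rewrite plus_INR, mult_INR; simpl; lra). apply le_INR. unfold n in *. lia. }
      assert (0 <= 2 * A / Q) by (apply Rlt_le, Rdiv_lt_0_compat; lra).
      assert ((2 * INR N + 1) * (2 * A / Q) <= 4 * A / (INR N + 1)).
      { unfold Q. apply Rmult_le_reg_r with ((INR N + 1) ^ 2). nra. unfold Rdiv.
        replace ((2 * INR N + 1) * (2 * A * / (INR N + 1) ^ 2) * (INR N + 1) ^ 2) with ((2 * INR N + 1) * (2 * A)) by (field; lra).
        replace (4 * A * / (INR N + 1) * (INR N + 1) ^ 2) with (4 * A * (INR N + 1)) by (field; lra). nra. }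
      assert (4 * A / (INR N + 1) <= 1/100). { apply Rmult_le_reg_r with (INR N + 1). lra. unfold Rdiv. rewrite Rmult_assoc, Rinv_l by lra. nra. }
      nra.
    - lia. }
  destruct HINV as [Hsupp [Hortho [Hbd Hdiag]]].
  set (a := acoef n w) in *. set (u := uT n w a) in *.
  exists (fun j k => u (rank k) (rank j)).
  split; [split|].
  - intros k l Hk Hl. rewrite sumC_sym. fold n.
    rewrite (csum_ext _ _ (fun p => Cmult (Cconj (u (rank k) p)) (u (rank l) p))) by (intros; rewrite rank_pos; auto).
    change (ip n (u (rank k)) (u (rank l)) = RtoC (kdelta k l)). rewrite Hortho by (apply rank_bound; lia).
    rewrite cd_kdelta, !pos_rank. auto.
  - intros j l Hj Hl. rewrite sumC_sym. fold n.
    rewrite (csum_ext _ _ (fun q => Cmult (u q (rank j)) (Cconj (u q (rank l))))) by (intros; rewrite rank_pos; auto).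
    rewrite (cols_to_rows n u). rewrite cd_kdelta, !pos_rank. auto.
    intros p q Hp Hq. apply Hortho; auto. apply rank_bound; lia. apply rank_bound; lia.
  - intros j k Hj Hk.
    set (p := rank k). set (i := rank j).
    assert (Hp : (p < n)%nat) by (apply rank_bound; lia).
    assert (Hi : (i < n)%nat) by (apply rank_bound; lia).
    assert (HNNjk : NN j k = w p i) by (unfold w, p, i; rewrite !pos_rank; auto).
    rewrite HNNjk.
    assert (Hdiff : Cminus (u p i) (w p i) = csum n (fun m => Cmult (Cminus (a p m) (cd m p)) (w m i))).
    { unfold u, uT, comb.
      rewrite (csum_ext n (fun m => Cmult (Cminus (a p m) (cd m p)) (w m i)) (fun m => Cminus (Cmult (a p m) (w m i)) (Cmult (w m i) (cd m p)))) by (intros; ring).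
      rewrite csum_minus, csum_delta by auto. auto. }
    rewrite Hdiff.
    set (M := Z.abs_nat k).
    assert (HM : Z.abs k = Z.of_nat M) by (unfold M; rewrite Zabs2Nat.id_abs; auto).
    assert (HpM : (p <= 2 * M)%nat) by (unfold p, M; apply rank_le).
    set (T := rsum (S p) (fun r => E r p)).
    eapply Rle_trans. apply Cmod_csum.
    eapply Rle_trans. apply (rsum_le _ _ (fun m => (if Nat.eqb m p then 2 * T * Cmod (w p i) else 0)
        + (if Nat.ltb m p then 2 * E m p * Cmod (w m i) else 0))).
    { intros m Hm. rewrite Cmod_mult. pose proof (Cmod_ge_0 (w m i)).
      destruct (Nat.eqb_spec m p); destruct (Nat.ltb_spec m p); try lia.
      - subst m. unfold cd. rewrite Nat.eqb_refl. pose proof (Hdiag p Hp). unfold T. nra.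
      - unfold cd. destruct (Nat.eqb_spec m p); [lia|]. replace (Cminus (a p m) (RtoC 0)) with (a p m) by ring.
        pose proof (Hbd p m Hp H0). nra.
      - unfold cd. destruct (Nat.eqb_spec m p); [lia|]. rewrite Hsupp by lia.
        replace (Cminus (RtoC 0) (RtoC 0)) with (RtoC 0) by ring. rewrite Cmod_0. lra. }
    rewrite rsum_plus, rsum_delta by auto. rewrite rsum_restrict by lia.
    apply Rplus_le_compat.
    + apply Rmult_le_compat_r. apply Cmod_ge_0.
      unfold sigma_k. rewrite HM, sumR_sym.
      assert (HT2 : T = 2 * rsum (S p) (fun r => eps (pos r) k)).
      { unfold T, E. rewrite <- rsum_scal_l. apply rsum_ext. intros. unfold p. rewrite pos_rank. auto. }
      rewrite HT2. fold eps.
      assert (rsum (S p) (fun r => eps (pos r) k) <= rsum (2 * M + 1) (fun r => eps (pos r) k)).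
      { apply rsum_mono_n. lia. intros. apply Epsnn. }
      lra.
    + rewrite HM, sumR_half.
      eapply Rle_trans; [|apply (rsum_mono_n p)]. apply rsum_le. intros m Hm.
      destruct (Z.eq_dec (pos m) k). exfalso. assert (rank (pos m) = p) by (unfold p; rewrite e; auto). rewrite rank_pos in H. lia.
      unfold E, w, p, i. rewrite !pos_rank. unfold eps. lra.
      auto.
      intros. destruct (Z.eq_dec (pos i0) k). lra.
      apply Rmult_le_pos. pose proof (Epsnn (pos i0) k). lra. apply Cmod_ge_0.
Qed.
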